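(* Let $P$ be a polyomino whose matrix contains neither $S_1=\begin{bmatrix}1&0\\0&1\end{bmatrix}$ nor $S_2=\begin{bmatrix}0&1\\1&0\end{bmatrix}$ as a submatrix (an $L$-polyomino). Then $P$ is uniquely determined by its horizontal and vertical projections, i.e. no other binary matrix has the same vector of row sums and the same vector of column sums as the matrix of $P$.
   Context: A polyomino is a finite union of unit cells of $\mathbb{Z}\times\mathbb{Z}$ that is connected via edge adjacency, up to translation, identified with the binary matrix of its minimal bounding rectangle (entry $1$ iff the corresponding unit square is a cell). A matrix is a submatrix of another if obtained by deleting rows and/or columns. The horizontal (resp. vertical) projections of a binary matrix are the vector of its row sums (resp. column sums). *)

(* Defs.v *)
From mathcomp Require Import all_boot all_order all_algebra.
Set Implicit Arguments. Unset Strict Implicit. Unset Printing Implicit Defensive.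

(* A binary matrix is 'M[bool]_(m, n); entry true = 1. *)

Definition hproj m n (A : 'M[bool]_(m, n)) (i : 'I_m) : nat :=
  \sum_(j < n) (A i j : nat).

Definition vproj m n (A : 'M[bool]_(m, n)) (j : 'I_n) : nat :=
  \sum_(i < m) (A i j : nat).

Definition cell_adj m n (x y : 'I_m * 'I_n) : bool :=
  ((x.1 == y.1 :> nat) && ((x.2.+1 == y.2 :> nat) || (y.2.+1 == x.2 :> nat)))
  || ((x.2 == y.2 :> nat) && ((x.1.+1 == y.1 :> nat) || (y.1.+1 == x.1 :> nat))).

Definition cell_rel m n (A : 'M[bool]_(m, n)) : rel ('I_m * 'I_n) :=
  fun x y => [&& A x.1 x.2, A y.1 y.2 & cell_adj x y].

(* A is the matrix of a polyomino: its cells are nonempty and edge-connected,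
   and its bounding rectangle is minimal (every row and column has a cell). *)
Definition is_polyomino m n (A : 'M[bool]_(m, n)) : Prop :=
  [/\ exists x : 'I_m * 'I_n, A x.1 x.2,
      forall x y : 'I_m * 'I_n, A x.1 x.2 -> A y.1 y.2 -> connect (cell_rel A) x y,
      forall i : 'I_m, exists j : 'I_n, A i j
    & forall j : 'I_n, exists i : 'I_m, A i j].

Definition contains_S1 m n (A : 'M[bool]_(m, n)) : Prop :=
  exists (i1 i2 : 'I_m) (j1 j2 : 'I_n), [/\ i1 < i2, j1 < j2 &
    [&& A i1 j1, ~~ A i1 j2, ~~ A i2 j1 & A i2 j2]].

Definition contains_S2 m n (A : 'M[bool]_(m, n)) : Prop :=
  exists (i1 i2 : 'I_m) (j1 j2 : 'I_n), [/\ i1 < i2, j1 < j2 &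
    [&& ~~ A i1 j1, A i1 j2, A i2 j1 & ~~ A i2 j2]].

Definition L_polyomino m n (A : 'M[bool]_(m, n)) : Prop :=
  [/\ is_polyomino A, ~ contains_S1 A & ~ contains_S2 A].

(* Main.v *)
Require Import Defs.
From mathcomp Require Import all_boot all_order all_algebra.
From mathcomp Require Import zify.
Set Implicit Arguments. Unset Strict Implicit.

Section Aux.
Variables (m n : nat) (A : 'M[bool]_(m, n)).

Lemma col_nest : ~ contains_S1 A -> ~ contains_S2 A ->
  forall j j' : 'I_n, (forall i, A i j -> A i j') \/ (forall i, A i j' -> A i j).
Proof.
move=> n1 n2 j j'.
case: (boolP [exists i, A i j && ~~ A i j']) => [/existsP [i1 /andP [h1 h1']]|].
  case: (boolP [exists i, A i j' && ~~ A i j]) => [/existsP [i2 /andP [h2 h2']]|].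
    exfalso.
    have ni : i1 != i2 by apply/eqP => e; subst; rewrite h1 in h2'.
    have nj : j != j' by apply/eqP => e; subst; rewrite h1 in h1'.
    case: (ltngtP i1 i2) => [lti|lti|/val_inj e]; last by rewrite e eqxx in ni.
    - case: (ltngtP j j') => [ltj|ltj|/val_inj e]; last by rewrite e eqxx in nj.
      + apply: n1; exists i1, i2, j, j'; split => //; by rewrite h1 h1' h2 h2'.
      + apply: n2; exists i1, i2, j', j; split => //; by rewrite h1 h1' h2 h2'.
    - case: (ltngtP j j') => [ltj|ltj|/val_inj e]; last by rewrite e eqxx in nj.
      + apply: n2; exists i2, i1, j, j'; split => //; by rewrite h1 h1' h2 h2'.
      + apply: n1; exists i2, i1, j', j; split => //; by rewrite h1 h1' h2 h2'.
  rewrite negb_exists => /forallP H; right => i hi.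
  by move: (H i); rewrite hi /=; case: (A i j).
rewrite negb_exists => /forallP H; left => i hi.
by move: (H i); rewrite hi /=; case: (A i j').
Qed.

Lemma sub_le {j j' : 'I_n} : (forall i, A i j -> A i j') -> vproj A j <= vproj A j'.
Proof.
move=> H; apply: leq_sum => i _; case: (boolP (A i j)) => h //.
by rewrite (H _ h).
Qed.

Lemma sub_eq {j j' : 'I_n} : (forall i, A i j -> A i j') ->
  vproj A j' <= vproj A j -> forall i, A i j' -> A i j.
Proof.
move=> H le i hi.
have L : vproj A j <= vproj A j' ?= iff [forall (i | true), (A i j : nat) == A i j'].
  apply: leqif_sum => k _; split.
    by case: (boolP (A k j)) => h //; rewrite (H _ h).
  by case: (boolP (A k j)) => h; [rewrite (H _ h) | case: (A k j')].
move: L => [_ E].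
have : vproj A j == vproj A j' by rewrite eqn_leq le sub_le.
rewrite E => /forallP /(_ i) /=; rewrite hi; by case: (A i j).
Qed.

Definition qq (j : 'I_n) := #|[pred j' : 'I_n | vproj A j <= vproj A j']|.

Lemma hproj_card i : hproj A i = #|[pred j | A i j]|.
Proof.
rewrite /hproj -sum1_card [RHS]big_mkcond /=; apply: eq_bigr => j _; rewrite inE.
by case: (A i j).
Qed.

Lemma thresh : ~ contains_S1 A -> ~ contains_S2 A ->
  forall i j, A i j = (qq j <= hproj A i).
Proof.
move=> n1 n2 i j; rewrite hproj_card.
case: (boolP (A i j)) => h.
  apply/esym; apply: subset_leq_card; apply/subsetP => j' /=.
  rewrite !inE => le.
  case: (col_nest n1 n2 j j') => H; first exact: H.
  exact: (sub_eq H le h).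
apply/esym/negbTE; rewrite -ltnNge.
have : #|[predU1 j & [pred j0 | A i j0]]| <= qq j.
  apply: subset_leq_card; apply/subsetP => j' /=; rewrite !inE.
  case/orP => [/eqP -> //| hj'].
  case: (col_nest n1 n2 j j') => H; first exact: (sub_le H).
  by rewrite (H _ hj') in h.
by rewrite cardU1 inE h /= add1n.
Qed.

End Aux.


Lemma sum_weights m n (X : 'M[bool]_(m, n)) (a : 'I_m -> nat) (b : 'I_n -> nat) :
  \sum_(i < m) \sum_(j < n) (X i j : nat) * (a i + b j) =
  \sum_(i < m) a i * hproj X i + \sum_(j < n) b j * vproj X j.
Proof.
transitivity (\sum_(i < m) \sum_(j < n) ((X i j : nat) * a i) +
              \sum_(i < m) \sum_(j < n) ((X i j : nat) * b j)).
  rewrite -big_split /=; apply: eq_bigr => i _.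
  by rewrite -big_split /=; apply: eq_bigr => j _; rewrite mulnDr.
congr (_ + _).
  apply: eq_bigr => i _; rewrite /hproj big_distrr /=.
  by apply: eq_bigr => j _; rewrite mulnC.
rewrite exchange_big /=; apply: eq_bigr => j _; rewrite /vproj big_distrr /=.
by apply: eq_bigr => i _; rewrite mulnC.
Qed.

Theorem proposition16 (m n : nat) (A : 'M[bool]_(m, n)) :
  L_polyomino A ->
  forall B : 'M[bool]_(m, n),
    hproj B =1 hproj A -> vproj B =1 vproj A -> B = A.
Proof.
move=> [_ n1 n2] B hB vB.
pose a i := 2 * hproj A i + 1.
pose b j := 2 * (n - qq A j).
pose w i j := a i + b j.
pose K := 2 * n.
have qn j : qq A j <= n.
  by rewrite /qq; apply: leq_trans (max_card _) _; rewrite card_ord.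
have cell i j : (B i j : nat) * w i j + (A i j : nat) * K <=
                (A i j : nat) * w i j + (B i j : nat) * K ?= iff (B i j == A i j).
  have T := thresh n1 n2 i j.
  have := qn j; rewrite /w /a /b /K.
  case: (A i j) T => /esym T; case: (B i j) => /=; split => //; lia.
have S1 : \sum_(i < m) \sum_(j < n) (B i j : nat) * w i j =
          \sum_(i < m) \sum_(j < n) (A i j : nat) * w i j.
  rewrite /w !sum_weights; congr (_ + _); apply: eq_bigr => ? _; by rewrite ?hB ?vB.
have S2 : \sum_(i < m) \sum_(j < n) (B i j : nat) * (0 + K) =
          \sum_(i < m) \sum_(j < n) (A i j : nat) * (0 + K).
  rewrite (sum_weights B (fun _ => 0) (fun _ => K)) (sum_weights A (fun _ => 0) (fun _ => K)).
  congr (_ + _); apply: eq_bigr => ? _; by rewrite ?hB ?vB.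
rewrite add0n in S2.
clearbody a b w K.
have L : \sum_(i < m) \sum_(j < n) ((B i j : nat) * w i j + (A i j : nat) * K) <=
          \sum_(i < m) \sum_(j < n) ((A i j : nat) * w i j + (B i j : nat) * K)
   ?= iff [forall i, [forall j, B i j == A i j]].
  apply: leqif_sum => i _; apply: leqif_sum => j _; exact: cell.
move: L => [_ E].
have EQ : \sum_(i < m) \sum_(j < n) ((B i j : nat) * w i j + (A i j : nat) * K) ==
          \sum_(i < m) \sum_(j < n) ((A i j : nat) * w i j + (B i j : nat) * K).
  apply/eqP.
  rewrite (eq_bigr _ (fun i _ => big_split _ _ _ _ _)) /= big_split /=.
  rewrite [RHS](eq_bigr _ (fun i _ => big_split _ _ _ _ _)) /= big_split /=.
  by rewrite S1 S2 addnC.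
move: EQ; rewrite E => /forallP H.
apply/matrixP => i j.
by move: (H i) => /forallP /(_ j) /eqP.
Qed.
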